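(* Let $\mathbf C$ be an admissible category of lattices. The adjunction $\mathbb P\dashv\mathrm{pt}$ between $\mathbf{Conv}$ and $(\mathbf C^{\mathrm{conv}})^{op}$ restricts to an adjunction between the category $\mathbf{Lim}$ of limit spaces and $(\mathbf C^{\mathrm{lim}})^{op}$, and also to an adjunction between $\mathbf{Lim}$ and $(\mathbf C^{\mathrm{lim}}_{\mathrm{cl}})^{op}$.
   Context: Setting: a filter on an inf-semilattice $L$ is a non-empty upward-closed subset closed under binary meets ($L$ allowed); $\mathbb F L$ is the set of filters. A category of lattices has lattices as objects and lattice morphisms; it is admissible if every powerset $\mathbb P(X)$ is an object and there are classes of index sets $\mathcal I,\mathcal J$ with morphisms exactly the monotone maps preserving existing $I$-indexed infima ($I\in\mathcal I$) and $J$-indexed suprema ($J\in\mathcal J$). A convergence $\mathbf C$-object is $(L,\lim_L)$ with $\lim_L:\mathbb F L\to L$ monotone; $\mathbf C^{\mathrm{conv}}$-morphisms are $\mathbf C$-morphisms $\varphi:L\to L'$ with $\lim_{L'}\mathcal F\le\varphi(\lim_L\varphi^{-1}(\mathcal F))$. Convergence spaces and $\mathbf{Conv}$: a set $X$ with relation $\to$ between filters of subsets and points, with $\{S:x\in S\}\to x$ and upward monotonicity in the filter; continuous maps preserve convergence via image filters. $\mathbb P(X)$ has $\lim\mathcal F=\{x:\mathcal F\to x\}$, $\mathbb P(f)=f^{-1}$. $\mathrm{pt}\,L$ is the set of $\mathbf C^{\mathrm{conv}}$-morphisms $L\to\{\emptyset,\{*\}\}$ (the latter with constant limit $\{*\}$),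 with $\ell^\bullet=\{\psi:\psi(\ell)=\{*\}\}$ and $\mathcal F\to\psi$ iff $\psi\in(\lim_L\{\ell:\ell^\bullet\in\mathcal F\})^\bullet$; $\mathrm{pt}\,\varphi(\psi)=\psi\circ\varphi$. It is known that $\mathbb P\dashv\mathrm{pt}$ is an adjunction between $\mathbf{Conv}$ and $(\mathbf C^{\mathrm{conv}})^{op}$. A limit space is a convergence space in which $\mathcal F\to x$ and $\mathcal G\to x$ imply $\mathcal F\cap\mathcal G\to x$; $\mathbf{Lim}$ is the full subcategory of $\mathbf{Conv}$ of limit spaces. A limit $\mathbf C$-object is a convergence $\mathbf C$-object with $\lim_L(\mathcal F\cap\mathcal G)=\lim_L\mathcal F\wedge\lim_L\mathcal G$ for all $\mathcal F,\mathcal G\in\mathbb F L$; $\mathbf C^{\mathrm{lim}}$ is the full subcategory of these. $\mathcal C_L$ is the set of complemented elements of $L$; a convergence $\mathbf C$-object is classical if for all filters $\mathcal F,\mathcal G$, $\mathcal F\cap\mathcal C_L=\mathcal G\cap\mathcal C_L$ implies $\lim_L\mathcal F=\lim_L\mathcal G$; $\mathbf C^{\mathrm{lim}}_{\mathrm{cl}}$ is the full subcategory of classical limit $\mathbf C$-objects. *)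

(* Defs.v *)
From HB Require Import structures.
From mathcomp Require Import all_boot all_order.
From mathcomp Require Import boolp classical_sets.
Set Implicit Arguments. Unset Strict Implicit. Unset Printing Implicit Defensive.
Import Order.LTheory.
Local Open Scope classical_set_scope.

(* filter on an inf-semilattice: nonempty, upward closed, closed under binary
   meets (the whole lattice is allowed) *)
Definition lat_filter d (L : latticeType d) (F : set L) : Prop :=
  (exists x, F x) /\
  (forall x y : L, F x -> (x <= y)%O -> F y) /\
  (forall x y : L, F x -> F y -> F (Order.meet x y)).

Definition is_inf d (L : latticeType d) (I : Type) (f : I -> L) (m : L) : Prop :=
  (forall i, (m <= f i)%O) /\ (forall z, (forall i, (z <= f i)%O) -> (z <= m)%O).

Definition is_sup d (L : latticeType d) (I : Type) (f : I -> L) (m : L) : Prop :=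
  (forall i, (f i <= m)%O) /\ (forall z, (forall i, (f i <= z)%O) -> (m <= z)%O).

(* morphisms of the category determined by the classes of index sets Icl, Jcl:
   monotone maps preserving all existing I-indexed infima (I in Icl) and all
   existing J-indexed suprema (J in Jcl) *)
Definition Cmor (Icl Jcl : Type -> Prop) d d' (L : tbLatticeType d)
    (L' : tbLatticeType d') (phi : L -> L') : Prop :=
  (forall x y : L, (x <= y)%O -> (phi x <= phi y)%O) /\
  (forall I : Type, Icl I -> forall (f : I -> L) (m : L),
      is_inf f m -> is_inf (fun i => phi (f i)) (phi m)) /\
  (forall J : Type, Jcl J -> forall (f : J -> L) (m : L),
      is_sup f m -> is_sup (fun j => phi (f j)) (phi m)).

Definition lattice_mor d d' (L : tbLatticeType d) (L' : tbLatticeType d')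
    (phi : L -> L') : Prop :=
  (forall x y, phi (Order.meet x y) = Order.meet (phi x) (phi y)) /\
  (forall x y, phi (Order.join x y) = Order.join (phi x) (phi y)) /\
  phi \top%O = \top%O /\ phi \bot%O = \bot%O.

(* An admissible category of lattices, given by its class of objects Obj and
   the classes of index sets Icl, Jcl: every powerset P(X) = set X (ordered by
   inclusion) is an object, and the morphisms (the maps satisfying Cmor
   between objects) are lattice morphisms. *)
Definition admissible (Obj : forall d, tbLatticeType d -> Prop)
    (Icl Jcl : Type -> Prop) : Prop :=
  (forall X : Type, Obj set_display (set X)) /\
  (forall d d' (L : tbLatticeType d) (L' : tbLatticeType d') (phi : L -> L'),
      Obj d L -> Obj d' L' -> Cmor Icl Jcl phi -> lattice_mor phi).

(* (L, lim) with lim : F L -> L monotone (lim is only ever evaluated on filters) *)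
Definition conv_obj (Obj : forall d, tbLatticeType d -> Prop) d
    (L : tbLatticeType d) (lim : set L -> L) : Prop :=
  Obj d L /\
  (forall F G : set L, lat_filter F -> lat_filter G -> F `<=` G ->
      (lim F <= lim G)%O).

Definition conv_mor (Icl Jcl : Type -> Prop) d d' (L : tbLatticeType d)
    (L' : tbLatticeType d') (lim : set L -> L) (lim' : set L' -> L')
    (phi : L -> L') : Prop :=
  Cmor Icl Jcl phi /\
  (forall F : set L', lat_filter F -> (lim' F <= phi (lim (phi @^-1` F)))%O).

Definition lim_obj (Obj : forall d, tbLatticeType d -> Prop) d
    (L : tbLatticeType d) (lim : set L -> L) : Prop :=
  conv_obj Obj lim /\
  (forall F G : set L, lat_filter F -> lat_filter G ->
      lim (F `&` G) = Order.meet (lim F) (lim G)).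

Definition complemented d (L : tbLatticeType d) : set L :=
  [set x | exists y : L, Order.meet x y = \bot%O /\ Order.join x y = \top%O].

Definition classical_obj d (L : tbLatticeType d) (lim : set L -> L) : Prop :=
  forall F G : set L, lat_filter F -> lat_filter G ->
    F `&` @complemented d L = G `&` @complemented d L -> lim F = lim G.

Definition cl_lim_obj (Obj : forall d, tbLatticeType d -> Prop) d
    (L : tbLatticeType d) (lim : set L -> L) : Prop :=
  lim_obj Obj lim /\ classical_obj lim.

Definition conv_space (X : Type) (conv : set (set X) -> X -> Prop) : Prop :=
  (forall x : X, conv [set S : set X | S x] x) /\
  (forall (F G : set (set X)) (x : X), lat_filter F -> lat_filter G ->
      F `<=` G -> conv F x -> conv G x).

Definition limit_space (X : Type) (conv : set (set X) -> X -> Prop) : Prop :=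
  conv_space conv /\
  (forall (F G : set (set X)) (x : X), lat_filter F -> lat_filter G ->
      conv F x -> conv G x -> conv (F `&` G) x).

Definition Plim (X : Type) (conv : set (set X) -> X -> Prop) :
  set (set X) -> set X := fun F => [set x | conv F x].

(* the two-element object {emptyset, {*}} = set unit with constant limit {*} *)
Definition two_lim : set (set unit) -> set unit := fun _ => setT.

Definition pt (Icl Jcl : Type -> Prop) d (L : tbLatticeType d)
    (lim : set L -> L) : Type :=
  {psi : L -> set unit | conv_mor Icl Jcl lim two_lim psi}.

Definition bullet (Icl Jcl : Type -> Prop) d (L : tbLatticeType d)
    (lim : set L -> L) (l : L) : set (pt Icl Jcl lim) :=
  [set psi | proj1_sig psi l = setT].

Definition pt_conv (Icl Jcl : Type -> Prop) d (L : tbLatticeType d)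
    (lim : set L -> L) (F : set (set (pt Icl Jcl lim))) (psi : pt Icl Jcl lim)
  : Prop :=
  @bullet Icl Jcl d L lim (lim [set l | F (@bullet Icl Jcl d L lim l)]) psi.

(* Main.v *)
Require Import Defs.
From HB Require Import structures.
From mathcomp Require Import all_boot all_order.
From mathcomp Require Import boolp classical_sets.
Set Implicit Arguments. Unset Strict Implicit.
Import Order.LTheory.
Local Open Scope classical_set_scope.

Lemma filter_top d (L : tbLatticeType d) (F : set L) : lat_filter F -> F \top%O.
Proof. by move=> [[x Fx] [up _]]; apply: (up x); rewrite ?lex1. Qed.

Lemma filterI d (L : tbLatticeType d) (F G : set L) :
  lat_filter F -> lat_filter G -> lat_filter (F `&` G).
Proof.
move=> hF hG; have tF := filter_top hF; have tG := filter_top hG.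
case: hF => _ [uF mF]; case: hG => _ [uG mG].
split; first by exists \top%O.
split.
- by move=> x y [Fx Gx] le; split; [exact: (uF x) | exact: (uG x)].
- by move=> x y [Fx Gx] [Fy Gy]; split; [exact: mF | exact: mG].
Qed.

Lemma P_lim (X : Type) (conv : set (set X) -> X -> Prop) Obj Icl Jcl :
  admissible Obj Icl Jcl -> limit_space conv -> lim_obj Obj (Plim conv).
Proof.
move=> [hO _] [[_ up] inter]; split.
  split; first exact: hO.
  move=> F G fF fG FG; rewrite subsetEset => x /= cx.
  exact: (up F G x).
move=> F G fF fG; rewrite meetEset; apply/seteqP; split => x /=.
  move=> cx; split.
  - by apply: (up (F `&` G) F x) ; by [exact: filterI | move=> S [] | ].
  - by apply: (up (F `&` G) G x) ; by [exact: filterI | move=> S [] | ].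
by move=> [cF cG]; exact: inter.
Qed.

Lemma P_cl (X : Type) (conv : set (set X) -> X -> Prop) :
  classical_obj (Plim conv).
Proof.
move=> F G _ _ FG.
have -> : F = G.
  apply/seteqP; split => S hS.
  - have : (F `&` complemented (L:=set X)) S.
      by split => //; exists (~` S); rewrite meetEset joinEset setICr setUCr.
    by rewrite FG => -[].
  - have : (G `&` complemented (L:=set X)) S.
      by split => //; exists (~` S); rewrite meetEset joinEset setICr setUCr.
    by rewrite -FG => -[].
by [].
Qed.

Lemma pt_limit Obj Icl Jcl d (L : tbLatticeType d) (lim : set L -> L) :
  admissible Obj Icl Jcl -> lim_obj Obj lim ->
  limit_space (@pt_conv Icl Jcl d L lim).
Proof.
move=> [hO hM] [[OL limmono] limI].
have lm : forall psi : pt Icl Jcl lim, lattice_mor (proj1_sig psi).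
  by move=> [psi [cm _]] /=; apply: hM => //; exact: hO.
have mono : forall psi : pt Icl Jcl lim, forall x y, (x <= y)%O ->
    proj1_sig psi x = setT -> proj1_sig psi y = setT.
  move=> [psi [[m _] _]] x y le /= px; have := m x y le.
  by rewrite subsetEset px => h; apply/seteqP; split => // z _; exact: h.
have AF : forall F, lat_filter F ->
    lat_filter [set l | F (@bullet Icl Jcl d L lim l)].
  move=> F hF; have tF := filter_top hF; case: hF => _ [uF mF].
  split.
    exists \top%O => /=; suff -> : @bullet Icl Jcl d L lim \top%O = \top%O by [].
    apply/seteqP; split => psi //= _.
    case: (lm psi) => _ [_ [h _]]. exact: h.
  split.
  - move=> x y /= Fx le; apply: (uF _ _ Fx); rewrite subsetEset => psi /=.
    exact: mono.
  - move=> x y /= Fx Fy.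
    suff -> : @bullet Icl Jcl d L lim (Order.meet x y) = Order.meet (@bullet Icl Jcl d L lim x) (@bullet Icl Jcl d L lim y).
      exact: mF.
    rewrite meetEset; apply/seteqP; split => psi; rewrite /bullet /=;
      case: (lm psi) => hm _; rewrite hm meetEset.
    + move=> h; split; apply/seteqP; split => // z _.
      * by have : (setT : set unit) z by []; rewrite -h => -[].
      * by have : (setT : set unit) z by []; rewrite -h => -[].
    + by move=> [-> ->]; rewrite setIT.
split; first split.
- move=> psi; rewrite /pt_conv /bullet /=.
  case: psi => psi [cm clim] /=.
  pose T1 := [set S : set unit | S = setT].
  have fT1 : lat_filter T1.
    split; first by exists setT.
    split.
    + move=> x y -> le; apply/seteqP; split => // z _.
      by move: le; rewrite subsetEset; apply.
    + by move=> x y -> ->; rewrite meetEset setIT.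
  have := clim T1 fT1; rewrite /two_lim subsetEset => h.
  apply/seteqP; split => // z _; apply: h.
- move=> F G psi fF fG FG; rewrite /pt_conv /bullet /= => h.
  apply: (mono psi _ _ _ h); apply: limmono; try exact: AF.
  by move=> l /=; apply: FG.
move=> F G psi fF fG; rewrite /pt_conv /bullet /= => hF hG.
have -> : [set l | (F `&` G) (@bullet Icl Jcl d L lim l)] =
   [set l | F (@bullet Icl Jcl d L lim l)] `&` [set l | G (@bullet Icl Jcl d L lim l)] by [].
rewrite limI; try exact: AF.
case: (lm psi) => [-> _]; rewrite meetEset hF hG setIT //.
Qed.

Theorem mainTheorem6 :
  forall (Obj : forall d, Order.TBLattice.type d -> Prop) (Icl Jcl : Type -> Prop),
    admissible Obj Icl Jcl ->
    (* restriction to Lim and (C^lim)^op *)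
    ((forall (X : Type) (conv : set (set X) -> X -> Prop),
        limit_space conv -> lim_obj Obj (Plim conv)) /\
     (forall d (L : Order.TBLattice.type d) (lim : set L -> L),
        lim_obj Obj lim -> limit_space (@pt_conv Icl Jcl d L lim))) /\
    (* restriction to Lim and (C^lim_cl)^op *)
    ((forall (X : Type) (conv : set (set X) -> X -> Prop),
        limit_space conv -> cl_lim_obj Obj (Plim conv)) /\
     (forall d (L : Order.TBLattice.type d) (lim : set L -> L),
        cl_lim_obj Obj lim -> limit_space (@pt_conv Icl Jcl d L lim))).
Proof.
move=> Obj Icl Jcl adm; split; split.
- by move=> X conv h; exact: (P_lim adm).
- by move=> d L lim h; exact: (pt_limit adm h).
- by move=> X conv h; split; [exact: (P_lim adm) | exact: P_cl].
- by move=> d L lim [h _]; exact: (pt_limit adm h).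
Qed.
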